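(* Consider any iteration of the while loop of algorithm Greedy-R, and let $(u,v)$ be the pair chosen in it. Then, with $S$ denoting the current set before $u\otimes v$ is inserted, for every $w\in\widetilde{S}$ we have $$\mathit{ov}(w,u\otimes v)=\mathit{ov}(w,u)\quad\text{and}\quad \mathit{ov}(u\otimes v,w)=\mathit{ov}(v,w).$$
   Context: For strings $x,y$, $\mathit{ov}(x,y)$ is the length of the longest suffix of $x$ that is also a prefix of $y$; $\mathrm{pref}(x,y)$ is $x$ with its suffix of length $\mathit{ov}(x,y)$ removed, and $x\otimes y=\mathrm{pref}(x,y)\,y$. $x^R$ denotes the reversal of $x$. For a set $X$ of strings, $\widetilde{X}=X\cup\{x^R:x\in X\}$. A set $X$ is reverse-factor-free if there are no distinct $x,y\in X$ such that $x$ is a factor of $y$ or of $y^R$. The procedure Make-Reverse-Factor-Free$(X)$ repeatedly removes from the current set a string $x$ for which some other string $y\neq x$ of the current set has $x$ as a factor of $y$ or of $y^R$, until no such string remains. Algorithm Greedy-R$(S)$ on a non-empty finite set of strings: first set $S:=$ Make-Reverse-Factor-Free$(S)$. Then, while $|S|>1$: among all pairs $(u,v)$ with $u,v\in\widetilde{S}$ and $u\notin\{v,v^R\}$, choose one with maximal $\mathit{ov}(u,v)$ (ties broken arbitrarily); set $S:=S\cup\{u\otimes v\}$ and then remove from $S$ all of $u,v,u^R,v^R$ that belong to $S$. Return the only element of $S$. *)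

(* Defs.v *)
From HB Require Import structures.
From mathcomp Require Import all_boot.
From mathcomp Require Import finmap.

Set Implicit Arguments.
Unset Strict Implicit.
Unset Printing Implicit Defensive.

Local Open Scope fset_scope.

Section Strings.
Variable T : choiceType.
Notation word := (seq T).

(* ov x y : length of the longest suffix of x that is also a prefix of y
   (not required to be proper). *)
Definition ov (x y : word) : nat :=
  \max_(k < (size x).+1 | drop (size x - k) x == take k y) (k : nat).

Definition pref (x y : word) : word := take (size x - ov x y) x.

Definition otimes (x y : word) : word := pref x y ++ y.

Definition factor (x y : word) : bool := infix x y.

Definition tilde (X : {fset word}) : {fset word} := X `|` [fset rev x | x in X].

Definition reverse_factor_free (X : {fset word}) : Prop :=
  forall x y, x \in X -> y \in X -> x != y -> ~~ factor x y && ~~ factor x (rev y).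

Definition mrff_step (X X' : {fset word}) : Prop :=
  exists x y, [/\ x \in X, y \in X, y != x, factor x y || factor x (rev y)
                & X' = X `\ x].

Inductive mrff_steps : {fset word} -> {fset word} -> Prop :=
| mrff_refl X : mrff_steps X X
| mrff_cons X Y Z : mrff_step X Y -> mrff_steps Y Z -> mrff_steps X Z.

(* Y is a possible output of Make-Reverse-Factor-Free(X) *)
Definition make_rff (X Y : {fset word}) : Prop :=
  mrff_steps X Y /\ ~ (exists Y', mrff_step Y Y').

(* (u,v) is a pair that may be chosen in the while loop on current set S *)
Definition greedy_choice (S : {fset word}) (u v : word) : Prop :=
  [/\ u \in tilde S, v \in tilde S, (u != v) && (u != rev v)
    & forall u' v', u' \in tilde S -> v' \in tilde S ->
        (u' != v') && (u' != rev v') -> ov u' v' <= ov u v].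

Definition greedy_next (S : {fset word}) (u v : word) : {fset word} :=
  (S `|` [fset otimes u v]) `\` [fset u; v; rev u; rev v].

(* S is the current set at the beginning of some iteration (or at the end)
   of the while loop of Greedy-R run on input S0 *)
Inductive greedy_reach (S0 : {fset word}) : {fset word} -> Prop :=
| greedy_start S : make_rff S0 S -> greedy_reach S0 S
| greedy_step S u v : greedy_reach S0 S -> 1 < #|` S| -> greedy_choice S u v ->
    greedy_reach S0 (greedy_next S u v).

End Strings.

(* Main.v *)
Require Import Defs.
From HB Require Import structures.
From mathcomp Require Import all_boot.
From mathcomp Require Import finmap.
From mathcomp Require Import zify.
Local Open Scope fset_scope.
Set Implicit Arguments.
Unset Strict Implicit.

Section L.
Variable T : choiceType.

Lemma ov_ge (x y a s b : seq T) : x = a ++ s -> y = s ++ b -> size s <= ov x y.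
Proof.
move=> -> ->; rewrite /ov.
have Hk : size s < (size (a ++ s)).+1 by rewrite size_cat ltnS leq_addl.
apply: (bigmax_sup (Ordinal Hk)) => //=.
by rewrite size_cat addnK drop_size_cat // take_size_cat.
Qed.

Lemma ov_wit (x y : seq T) : exists a s b, [/\ x = a ++ s, y = s ++ b & size s = ov x y].
Proof.
rewrite /ov.
have H0 : 0 < (size x).+1 by [].
have P0 : (drop (size x - (Ordinal H0 : nat)) x == take (Ordinal H0) y).
  by rewrite /= subn0 drop_size take0.
rewrite (bigmax_eq_arg _ P0).
case: arg_maxnP => // k /eqP Hk _.
have Hks : k <= size x by rewrite -ltnS.
exists (take (size x - k) x), (drop (size x - k) x), (drop k y).
split; first by rewrite cat_take_drop.
  by rewrite Hk cat_take_drop.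
by rewrite size_drop; lia.
Qed.

Lemma ov_le (x y : seq T) m :
  (forall a s b, x = a ++ s -> y = s ++ b -> size s <= m) -> ov x y <= m.
Proof. move=> H; have [a [s [b [E1 E2 <-]]]] := ov_wit x y; exact: H E1 E2. Qed.

Lemma pre_lem (s c u q : seq T) : s ++ c = u ++ q -> size s <= size u ->
  exists b, u = s ++ b.
Proof.
move=> E H; exists (drop (size s) u).
have: take (size s) (s ++ c) = take (size s) (u ++ q) by rewrite E.
rewrite take_size_cat // take_cat; case: ltnP => H2.
  by move=> Hs; rewrite -[in LHS](cat_take_drop (size s) u) -Hs.
have -> : size s = size u by apply/eqP; rewrite eqn_leq H H2.
by rewrite subnn take0 cats0 drop_size cats0.
Qed.

Lemma suf_lem (a s p v : seq T) : a ++ s = p ++ v -> size s <= size v ->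
  exists a', v = a' ++ s.
Proof.
move=> E H.
have E' : rev s ++ rev a = rev v ++ rev p by rewrite -!rev_cat E.
have Hsz : size (rev s) <= size (rev v) by rewrite !size_rev.
have [b Hb] := pre_lem E' Hsz.
exists (rev b); apply: (can_inj (@revK T)); by rewrite Hb rev_cat revK.
Qed.


Lemma otimes_wit (u v : seq T) : exists p t q,
  [/\ u = p ++ t, v = t ++ q, size t = ov u v & otimes u v = p ++ v].
Proof.
have [p [t [q [E1 E2 E3]]]] := ov_wit u v.
exists p, t, q; split => //.
by rewrite /otimes /pref -E3 E1 size_cat addnK take_size_cat.
Qed.

Lemma in_tilde (S : {fset seq T}) a :
  a \in tilde S -> exists x, x \in S /\ (a = x \/ a = rev x).
Proof.
rewrite /tilde in_fsetU => /orP [H|/imfsetP [x /= Hx ->]].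
  by exists a; split => //; left.
by exists x; split => //; right.
Qed.

Lemma in_tildeS (S : {fset seq T}) a : a \in S -> a \in tilde S.
Proof. by move=> H; rewrite /tilde in_fsetU H. Qed.

Lemma in_tildeR (S : {fset seq T}) a : a \in tilde S -> rev a \in tilde S.
Proof.
move=> /in_tilde [x [Hx [->|->]]]; rewrite /tilde in_fsetU.
  by apply/orP; right; apply/imfsetP; exists x.
by rewrite revK Hx.
Qed.

Lemma rff_factor (S : {fset seq T}) a b : reverse_factor_free S ->
  a \in tilde S -> b \in tilde S -> factor a b -> a = b \/ a = rev b.
Proof.
move=> R /in_tilde [x [Hx Ha]] /in_tilde [y [Hy Hb]] F.
case: (eqVneq x y) => [Exy|Nxy].
  subst y; case: Ha Hb => -> [->|->]; rewrite ?revK; tauto.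
have /andP [N1 N2] := R x y Hx Hy Nxy.
exfalso; move: F; rewrite /factor in N1 N2 *.
case: Ha Hb => -> [->|->].
- by rewrite (negbTE N1).
- by rewrite (negbTE N2).
- by rewrite infix_revLR (negbTE N2).
- by rewrite infix_rev (negbTE N1).
Qed.

Lemma factor_size (a b : seq T) : factor a b -> size a <= size b.
Proof. exact: size_infix. Qed.


Lemma catIl (p x y : seq T) : p ++ x = p ++ y -> x = y.
Proof. by elim: p => //= a p IH [E]; exact: IH. Qed.

Lemma no_span (S : {fset seq T}) u v a : reverse_factor_free S ->
  greedy_choice S u v -> a \in tilde S ->
  a != u -> a != rev u -> a != v -> a != rev v -> ~~ factor a (otimes u v).
Proof.
move=> R [Hu Hv _ Hmax] Ha N1 N2 N3 N4.
apply/negP => /infixP [c [d E]].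
have [p [t [q [Eu Ev Et Ez]]]] := otimes_wit u v.
rewrite Ez in E.
case: (leqP (size p) (size c)) => Hc.
  have [c' Ec] := pre_lem E Hc.
  rewrite Ec -catA in E; move/catIl: E => E.
  have F : factor a v by rewrite /factor E; apply/infixP; exists c', d.
  by case: (rff_factor R Ha Hv F) => /eqP; rewrite ?(negbTE N3) ?(negbTE N4).
have E2 : c ++ a ++ d = u ++ q by rewrite -E Eu Ev catA.
case: (leqP (size c + size a) (size u)) => Hca.
  have E3 : (c ++ a) ++ d = u ++ q by rewrite -catA.
  have Hs3 : size (c ++ a) <= size u by rewrite size_cat.
  have [b Eb] := pre_lem E3 Hs3.
  have F : factor a u by rewrite /factor Eb; apply/infixP; exists c, b; rewrite catA.
  by case: (rff_factor R Ha Hu F) => /eqP; rewrite ?(negbTE N1) ?(negbTE N2).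
have Hcu : size c <= size u by rewrite Eu size_cat; lia.
have [r Er] := pre_lem E2 Hcu.
rewrite Er -catA in E2; move/catIl: E2 => E2.
have Hr : size r <= size a by move: Hca; rewrite Er size_cat ltn_add2l => /ltnW.
have [a' Ea] := pre_lem (esym E2) Hr.
have H1 := ov_ge Er Ea.
have Hua : (u != a) && (u != rev a).
  rewrite eq_sym N1 /=; apply/eqP => Eua; move/eqP: N2; apply; by rewrite Eua revK.
have H2 := Hmax u a Hu Ha Hua.
have : size r > size t.
  have : size u = (size c + size r)%N by rewrite Er size_cat.
  have : size u = (size p + size t)%N by rewrite Eu size_cat.
  lia.
lia.
Qed.


Lemma rev_eqE (x w : seq T) : (rev x == w) = (x == rev w).
Proof.
apply/eqP/eqP => [<-|->]; by rewrite revK.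
Qed.

Lemma factor_u_z (u v : seq T) : factor u (otimes u v).
Proof.
have [p [t [q [Eu Ev _ Ez]]]] := otimes_wit u v.
by rewrite /factor Ez Eu Ev; apply/infixP; exists [::], q; rewrite /= catA.
Qed.

Lemma factor_v_z (u v : seq T) : factor v (otimes u v).
Proof.
have [p [t [q [Eu Ev _ Ez]]]] := otimes_wit u v.
by rewrite /factor Ez; apply/infixP; exists p, [::]; rewrite cats0.
Qed.

Lemma rff_make (S0 S : {fset seq T}) : make_rff S0 S -> reverse_factor_free S.
Proof.
move=> [_ N] x y Hx Hy Nxy; rewrite -negb_or; apply/negP => H.
apply: N; exists (S `\ x), x, y; split => //; by rewrite eq_sym.
Qed.

Lemma in_next (S : {fset seq T}) u v x : x \in greedy_next S u v ->
  [/\ x != u, x != v, x != rev u, x != rev v & (x \in S \/ x = otimes u v)].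
Proof.
rewrite /greedy_next !inE => /andP [H1 H2].
move: H1; rewrite !negb_or => /andP [/andP [/andP [N1 N2] N3] N4].
split => //; case/orP: H2 => [H|/eqP ->]; by [left | right].
Qed.

Lemma rff_next (S : {fset seq T}) u v : reverse_factor_free S ->
  greedy_choice S u v -> reverse_factor_free (greedy_next S u v).
Proof.
move=> R G; have [Hu Hv _ _] := G.
have K : forall a, a \in tilde S -> a != u -> a != rev u -> a != v -> a != rev v ->
    ~~ factor a (otimes u v).
  by move=> a Ha; apply: no_span R G Ha.
move=> x y /in_next [N1 N2 N3 N4 [Hx|Ex]] /in_next [M1 M2 M3 M4 [Hy|Ey]] Nxy.
- exact: R.
- subst y; apply/andP; split.
    by apply: K => //; apply: in_tildeS.
  rewrite /factor -infix_revLR; apply: K; rewrite ?rev_eqE ?revK //.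
  by apply/in_tildeR/in_tildeS.
- subst x; apply/andP; split; apply/negP => F.
    have F' : factor u y by apply: infix_trans (factor_u_z u v) F.
    have := rff_factor R Hu (in_tildeS Hy) F'.
    by case=> E; [move/eqP: M1; apply | move/eqP: M3; apply]; rewrite E ?revK.
  have F' : factor u (rev y) by apply: infix_trans (factor_u_z u v) F.
  have := rff_factor R Hu (in_tildeR (in_tildeS Hy)) F'.
  by case=> E; [move/eqP: M3; apply | move/eqP: M1; apply]; rewrite E ?revK.
- by subst x y; rewrite eqxx in Nxy.
Qed.

Lemma rff_reach (S0 S : {fset seq T}) : greedy_reach S0 S -> reverse_factor_free S.
Proof.
elim => [S' H|S' u v _ IH _ G]; first exact: rff_make H.
exact: rff_next IH G.
Qed.

End L.

Theorem lemma2 (T : choiceType) (S0 S : {fset seq T}) (u v : seq T) :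
  S0 != fset0 ->
  greedy_reach S0 S ->
  1 < #|` S| ->
  greedy_choice S u v ->
  forall w, w \in tilde S ->
    ov w (otimes u v) = ov w u /\ ov (otimes u v) w = ov v w.
Proof.
move=> _ Hr _ [Hu Hv _ _] w Hw.
have R := rff_reach Hr.
have [p [t [q [Eu Ev _ Ez]]]] := otimes_wit u v.
have Ezu : otimes u v = u ++ q by rewrite Ez Eu Ev catA.
have szw : forall x, x \in tilde S -> factor x w -> size x = size w.
  move=> x Hx F; case: (rff_factor R Hx Hw F) => ->; by rewrite ?size_rev.
split; apply/eqP; rewrite eqn_leq; apply/andP; split.
- apply: ov_le => a s b Ew Ez'.
  rewrite Ezu in Ez'.
  case: (leqP (size s) (size u)) => Hs.
    have [b' Eb'] := pre_lem (esym Ez') Hs.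
    exact: ov_ge Ew Eb'.
  have [d Ed] := pre_lem Ez' (ltnW Hs).
  have F : factor u w by rewrite /factor Ew Ed; apply/infixP; exists a, d.
  have := szw u Hu F; rewrite Ew size_cat; move: Hs; rewrite Ed size_cat.
  move=> H1 H2; lia.
- apply: ov_le => a s b Ew Eu'.
  apply: (ov_ge Ew); by rewrite Ezu Eu' -catA.
- apply: ov_le => a s b Ez' Ew.
  rewrite Ez in Ez'.
  case: (leqP (size s) (size v)) => Hs.
    have [a' Ea'] := suf_lem (esym Ez') Hs.
    exact: ov_ge Ea' Ew.
  have [d Ed] := suf_lem Ez' (ltnW Hs).
  have F : factor v w by rewrite /factor Ew Ed; apply/infixP; exists d, b; rewrite catA.
  have := szw v Hv F; rewrite Ew size_cat; move: Hs; rewrite Ed size_cat.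
  move=> H1 H2; lia.
- apply: ov_le => a s b Ev' Ew.
  apply: (ov_ge _ Ew); by rewrite Ez Ev' catA.
Qed.
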